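(* For integers $k,\ell,r,n$ with $0 \leq k-r \leq k \leq \ell \leq \ell+r \leq n$, the polynomial \[ \overline{ { n \brack k}}_{q,t} \overline{ { n \brack \ell}}_{q,t} - \overline{ { n \brack k-r}}_{q,t} \overline{ { n \brack \ell+r}}_{q,t} \] has non-negative coefficients as a polynomial in $t$ and $q$.
   Context: An overpartition is a partition in which the last occurrence of each distinct part size may be overlined; its weight $|\lambda|$ is the sum of its parts. For integers $0\le b\le a$, $\overline{{a \brack b}}_{q,t}=\sum_{\lambda} t^{\#_o(\lambda)} q^{|\lambda|}$, the sum over all overpartitions $\lambda$ with largest part at most $a-b$ and at most $b$ parts, $\#_o(\lambda)$ being the number of overlined parts. *)

(* Defs.v *)
From HB Require Import structures.
From mathcomp Require Import all_boot all_order all_algebra.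
Set Implicit Arguments. Unset Strict Implicit. Unset Printing Implicit Defensive.
Import GRing.Theory Num.Theory.
Local Open Scope ring_scope.

(* An overpartition with largest part <= m and at most b parts is encoded by
   its multiplicity data: for each part size s = i.+1 (i : 'I_m), the pair
   (multiplicity of s, whether the last occurrence of s is overlined). *)
Definition ovp_data (m b : nat) := {ffun 'I_m -> 'I_b.+1 * bool}.

Definition ovp_ok (m b : nat) (f : ovp_data m b) : bool :=
  ((\sum_(i < m) (f i).1 <= b)%N) && [forall i, (f i).2 ==> (0 < (f i).1)%N].

Definition ovp_weight (m b : nat) (f : ovp_data m b) : nat :=
  (\sum_(i < m) i.+1 * (f i).1)%N.

Definition ovp_novl (m b : nat) (f : ovp_data m b) : nat :=
  #|[pred i | (f i).2]|.

(* overline{[a, b]}_{q,t} as a polynomial in t (outer variable) whose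
   coefficients are integer polynomials in q (inner variable), for b <= a. *)
Definition ovgauss (a b : nat) : {poly {poly int}} :=
  \sum_(f : ovp_data (a - b) b | ovp_ok f)
     (('X^(ovp_weight f) : {poly int})%:P * 'X^(ovp_novl f)).

Definition nonneg_coefs (P : {poly {poly int}}) : Prop :=
  forall i j : nat, 0 <= (P`_i)`_j.

(* Main.v *)
Require Import Defs.
From HB Require Import structures.
From mathcomp Require Import all_boot all_order all_algebra.
From mathcomp Require Import ring zify.
Set Implicit Arguments. Unset Strict Implicit. Unset Printing Implicit Defensive.
Import GRing.Theory Num.Theory.
Local Open Scope ring_scope.

Definition PP := {poly {poly int}}.
Definition qq : PP := ('X : {poly int})%:P.
Definition tt : PP := 'X.

Fixpoint B (m : nat) : nat -> PP :=
  match m with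
  | 0 => fun _ => 1
  | m'.+1 => fix Bm (b : nat) : PP :=
      match b with
      | 0 => 1
      | b'.+1 => B m' b'.+1 + qq ^+ m'.+1 * Bm b' + tt * qq ^+ m'.+1 * B m' b'
      end
  end.

Lemma B0b b : B 0 b = 1. Proof. by []. Qed.
Lemma Bm0 m : B m 0 = 1. Proof. by case: m. Qed.
Lemma BSS m b : B m.+1 b.+1 = B m b.+1 + qq ^+ m.+1 * B m.+1 b + tt * qq ^+ m.+1 * B m b.
Proof. by []. Qed.

Definition nn (P : PP) := forall i j : nat, 0 <= (P`_i)`_j.

Lemma nn0 : nn 0. Proof. by move=> i j; rewrite !coef0. Qed.
Lemma nnD P Q : nn P -> nn Q -> nn (P + Q).
Proof. by move=> hP hQ i j; rewrite !coefD addr_ge0. Qed.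
Lemma nnM P Q : nn P -> nn Q -> nn (P * Q).
Proof.
move=> hP hQ i j; rewrite coefM coef_sum sumr_ge0 // => k _.
by rewrite coefM sumr_ge0 // => l _; rewrite mulr_ge0.
Qed.
Lemma nnC (c : {poly int}) : (forall j, 0 <= c`_j) -> nn c%:P.
Proof. by move=> h i j; rewrite coefC; case: eqP => _; rewrite ?coef0 ?h. Qed.
Lemma nn1 : nn 1.
Proof. by rewrite -polyC1; apply: nnC => j; rewrite coef1; case: eqP. Qed.
Lemma nnq : nn qq.
Proof. by apply: nnC => j; rewrite coefX; case: eqP. Qed.
Lemma nnt : nn tt.
Proof. move=> i j; rewrite coefX; case: eqP => _; first by rewrite coef1; case: eqP.
by rewrite coef0. Qed.
Lemma nnX P k : nn P -> nn (P ^+ k).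
Proof. move=> h; elim: k => [|k IH]; first by rewrite expr0; exact: nn1.
by rewrite exprS; apply: nnM. Qed.
Lemma nn_sub0 P : nn (P - P). Proof. rewrite subrr; exact: nn0. Qed.

Lemma nnB m b : nn (B m b).
Proof.
elim: m b => [|m IH] b; first exact: nn1.
elim: b => [|b IHb]; first by rewrite Bm0; exact: nn1.
rewrite BSS; apply: nnD; [apply: nnD|].
- exact: IH.
- by apply: nnM => //; apply: nnX; apply: nnq.
- apply: nnM => //; apply: nnM; [exact: nnt | apply: nnX; exact: nnq].
Qed.

Definition Ed m b := (1 - qq ^+ b.+1) * B m b.+1 - (1 - qq ^+ m.+1) * B m.+1 b
   + tt * (qq ^+ m.+1 - qq ^+ b.+1) * B m b.

Lemma Ed0 m b : Ed m b = 0.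
Proof.
elim: m b => [|m IH] b.
  elim: b => [|b IHb]; rewrite /Ed.
    by rewrite !B0b !Bm0; ring.
  move: IHb; rewrite /Ed !B0b (BSS 0 b) !B0b => IHb.
  have -> : (1 - qq ^+ b.+2) * 1 - (1 - qq ^+ 1) * (1 + qq ^+ 1 * B 1 b + tt * qq ^+ 1 * 1) + tt * (qq ^+ 1 - qq ^+ b.+2) * 1
     = ((1 - qq ^+ b.+1) * 1 - (1 - qq ^+ 1) * B 1 b + tt * (qq ^+ 1 - qq ^+ b.+1) * 1) * qq.
    by rewrite !exprS; ring.
  by rewrite IHb mul0r.
elim: b => [|b IHb].
  move: (IH 0); rewrite /Ed !Bm0 (BSS m 0) !Bm0 => IH0.
  have -> : (1 - qq ^+ 1) * (B m 1 + qq ^+ m.+1 * 1 + tt * qq ^+ m.+1 * 1) - (1 - qq ^+ m.+2) * 1 +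
     tt * (qq ^+ m.+2 - qq ^+ 1) * 1 = (1 - qq ^+ 1) * B m 1 - (1 - qq ^+ m.+1) * 1 + tt * (qq ^+ m.+1 - qq ^+ 1) * 1.
    by rewrite !exprS; ring.
  by [].
move: (IH b.+1) (IH b) IHb; rewrite /Ed => h1 h2 h3.
rewrite (BSS m b.+1) (BSS m.+1 b).
have Hm := BSS m b.
rewrite Hm in h1 h3 *.
match type of h1 with ?X1 = 0 => match type of h2 with ?X2 = 0 => match type of h3 with ?X3 = 0 =>
  transitivity (X1 + qq ^+ m.+2 * X3 + tt * qq ^+ m.+2 * X2); last by rewrite h1 h2 h3; ring end end end.
rewrite !exprS; ring.
Qed.

Lemma BSS2 m b : B m.+1 b.+1 = B m.+1 b + qq ^+ b.+1 * B m b.+1 + tt * qq ^+ b.+1 * B m b.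
Proof.
have := Ed0 m b; rewrite /Ed BSS => h.
apply/eqP; rewrite -subr_eq0; apply/eqP; rewrite -h; ring.
Qed.

Definition KX a b c d j := B a b.+1 * B c.+1 d - qq ^+ j * B a.+1 b * B c d.+1.

Definition KP n := forall a b c d j, (a + b + c + d <= n)%N -> (c <= a)%N -> (b <= d)%N ->
  (j <= (a - c) + (d - b))%N -> nn (KX a b c d j).

Lemma nnD3 x y z : nn x -> nn y -> nn z -> nn (x + y + z).
Proof. by move=> hx hy hz; apply: nnD => //; apply: nnD. Qed.
Lemma nnqM k P : nn P -> nn (qq ^+ k * P).
Proof. by move=> h; apply: nnM => //; apply: nnX; exact: nnq. Qed.
Lemma nntqM k P : nn P -> nn (tt * qq ^+ k * P).
Proof. by move=> h; apply: nnM => //; apply: nnM; [exact: nnt| apply: nnX; exact: nnq]. Qed.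
Lemma nnBB a b c d : nn (B a b * B c d).
Proof. by apply: nnM; apply: nnB. Qed.

Lemma caseA n a b c d j : KP n -> (a + b + c + d <= n.+1)%N -> (c <= a)%N -> (b < d)%N -> (0 < j)%N ->
  (j <= (a - c) + (d - b))%N -> nn (KX a b c d j).
Proof.
move=> IH Hn Hca Hbd Hj Hj2.
case: d Hbd Hn Hj2 => [//|d0] Hbd Hn Hj2.
case: j Hj Hj2 => [//|j0] _ Hj2.
rewrite /KX; case: c Hca Hn Hj2 => [|c0] Hca Hn Hj2.
  have e : B 0 d0.+2 = B 0 d0.+1 by [].
  have -> : B a b.+1 * B 1 d0.+1 - qq ^+ j0.+1 * B a.+1 b * B 0 d0.+2 =
    B a b.+1 * B 0 d0.+1 + qq ^+ 1 * (B a b.+1 * B 1 d0 - qq ^+ j0 * B a.+1 b * B 0 d0.+1)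
    + tt * qq ^+ 1 * (B a b.+1 * B 0 d0).
    by rewrite (BSS 0 d0) e !exprS; ring.
  apply: nnD3; [exact: nnBB | apply: nnqM | apply: nntqM; exact: nnBB].
  by apply: (IH a b 0 d0 j0); lia.
have -> : B a b.+1 * B c0.+2 d0.+1 - qq ^+ j0.+1 * B a.+1 b * B c0.+1 d0.+2 =
   (B a b.+1 * B c0.+1 d0.+1 - qq ^+ j0.+1 * B a.+1 b * B c0 d0.+2)
   + qq ^+ c0.+2 * (B a b.+1 * B c0.+2 d0 - qq ^+ j0 * B a.+1 b * B c0.+1 d0.+1)
   + tt * qq ^+ c0.+2 * (B a b.+1 * B c0.+1 d0 - qq ^+ j0 * B a.+1 b * B c0 d0.+1).
  by rewrite (BSS c0.+1 d0) (BSS c0 d0.+1) !exprS; ring.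
apply: nnD3; [|apply: nnqM|apply: nntqM].
- by apply: (IH a b c0 d0.+1 j0.+1); lia.
- by apply: (IH a b c0.+1 d0 j0); lia.
- by apply: (IH a b c0 d0 j0); lia.
Qed.

Lemma caseB n a b c d j : KP n -> (a + b + c + d <= n.+1)%N -> (c < a)%N -> (b <= d)%N ->
  (j < (a - c) + (d - b))%N -> nn (KX a b c d j).
Proof.
move=> IH Hn Hca Hbd Hj.
case: a Hca Hn Hj => [//|a0] Hca Hn Hj.
rewrite /KX; case: b Hbd Hn Hj => [|b0] Hbd Hn Hj.
  have e : B a0.+2 0 = B a0.+1 0 by rewrite !Bm0.
  have -> : B a0.+1 1 * B c.+1 d - qq ^+ j * B a0.+2 0 * B c d.+1 =
    (B a0 1 * B c.+1 d - qq ^+ j * B a0.+1 0 * B c d.+1) + qq ^+ a0.+1 * (B a0.+1 0 * B c.+1 d)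
    + tt * qq ^+ a0.+1 * (B a0 0 * B c.+1 d).
    by rewrite (BSS a0 0) e; ring.
  apply: nnD3; [| apply: nnqM; exact: nnBB | apply: nntqM; exact: nnBB].
  by apply: (IH a0 0 c d j); lia.
have -> : B a0.+1 b0.+2 * B c.+1 d - qq ^+ j * B a0.+2 b0.+1 * B c d.+1 =
   (B a0 b0.+2 * B c.+1 d - qq ^+ j * B a0.+1 b0.+1 * B c d.+1)
   + qq ^+ a0.+1 * (B a0.+1 b0.+1 * B c.+1 d - qq ^+ j.+1 * B a0.+2 b0 * B c d.+1)
   + tt * qq ^+ a0.+1 * (B a0 b0.+1 * B c.+1 d - qq ^+ j.+1 * B a0.+1 b0 * B c d.+1).
  by rewrite (BSS a0 b0.+1) (BSS a0.+1 b0) !exprS; ring.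
apply: nnD3; [|apply: nnqM|apply: nntqM].
- by apply: (IH a0 b0.+1 c d j); lia.
- by apply: (IH a0.+1 b0 c d j.+1); lia.
- by apply: (IH a0 b0 c d j.+1); lia.
Qed.

Lemma caseC n a b d : KP n -> (a + b + a + d <= n.+1)%N -> (b < d)%N -> nn (KX a b a d 0).
Proof.
move=> IH Hn Hbd.
case: d Hbd Hn => [//|d0] Hbd Hn.
rewrite /KX; case: a Hn => [|a0] Hn.
  have e : B 0 d0.+2 = B 0 d0.+1 by [].
  have -> : B 0 b.+1 * B 1 d0.+1 - qq ^+ 0 * B 1 b * B 0 d0.+2 =
    (B 0 b.+1 * B 1 d0 - qq ^+ 0 * B 1 b * B 0 d0.+1) + qq ^+ d0.+1 * (B 0 b.+1 * B 0 d0.+1)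
    + tt * qq ^+ d0.+1 * (B 0 b.+1 * B 0 d0).
    by rewrite (BSS2 0 d0) e; ring.
  apply: nnD3; [| apply: nnqM; exact: nnBB | apply: nntqM; exact: nnBB].
  by apply: (IH 0 b 0 d0 0); lia.
have -> : B a0.+1 b.+1 * B a0.+2 d0.+1 - qq ^+ 0 * B a0.+2 b * B a0.+1 d0.+2 =
   (B a0.+1 b.+1 * B a0.+2 d0 - qq ^+ 0 * B a0.+2 b * B a0.+1 d0.+1)
   + qq ^+ d0.+1 * (B a0.+1 b.+1 * B a0.+1 d0.+1 - qq ^+ 1 * B a0.+2 b * B a0 d0.+2)
   + tt * qq ^+ d0.+1 * (B a0.+1 b.+1 * B a0.+1 d0 - qq ^+ 1 * B a0.+2 b * B a0 d0.+1).
  by rewrite (BSS2 a0.+1 d0) (BSS2 a0 d0.+1) !exprS; ring.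
apply: nnD3; [|apply: nnqM|apply: nntqM].
- by apply: (IH a0.+1 b a0.+1 d0 0); lia.
- by apply: (IH a0.+1 b a0 d0.+1 1); lia.
- by apply: (IH a0.+1 b a0 d0 1); lia.
Qed.

Lemma caseD n a b c : KP n -> (a + b + c + b <= n.+1)%N -> (c < a)%N -> nn (KX a b c b (a - c)).
Proof.
move=> IH Hn Hca.
case: a Hca Hn => [//|a0] Hca Hn.
have -> : (a0.+1 - c = (a0 - c).+1)%N by lia.
set j0 := (a0 - c)%N.
rewrite /KX; case: b Hn => [|b0] Hn.
  have e : B a0.+2 0 = B a0.+1 0 by rewrite !Bm0.
  have -> : B a0.+1 1 * B c.+1 0 - qq ^+ j0.+1 * B a0.+2 0 * B c 1 =
    B a0.+1 0 * B c.+1 0 + qq ^+ 1 * (B a0 1 * B c.+1 0 - qq ^+ j0 * B a0.+1 0 * B c 1)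
    + tt * qq ^+ 1 * (B a0 0 * B c.+1 0).
    by rewrite (BSS2 a0 0) e !exprS; ring.
  apply: nnD3; [exact: nnBB | apply: nnqM | apply: nntqM; exact: nnBB].
  by apply: (IH a0 0 c 0 j0); rewrite /j0; lia.
have -> : B a0.+1 b0.+2 * B c.+1 b0.+1 - qq ^+ j0.+1 * B a0.+2 b0.+1 * B c b0.+2 =
   (B a0.+1 b0.+1 * B c.+1 b0.+1 - qq ^+ j0.+1 * B a0.+2 b0 * B c b0.+2)
   + qq ^+ b0.+2 * (B a0 b0.+2 * B c.+1 b0.+1 - qq ^+ j0 * B a0.+1 b0.+1 * B c b0.+2)
   + tt * qq ^+ b0.+2 * (B a0 b0.+1 * B c.+1 b0.+1 - qq ^+ j0 * B a0.+1 b0 * B c b0.+2).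
  by rewrite (BSS2 a0 b0.+1) (BSS2 a0.+1 b0) !exprS; ring.
apply: nnD3; [|apply: nnqM|apply: nntqM].
- by apply: (IH a0.+1 b0 c b0.+1 j0.+1); rewrite /j0; lia.
- by apply: (IH a0 b0.+1 c b0.+1 j0); rewrite /j0; lia.
- by apply: (IH a0 b0 c b0.+1 j0); rewrite /j0; lia.
Qed.

Lemma Ktriv a b : nn (KX a b a b 0).
Proof. rewrite /KX expr0 mul1r [X in _ - X]mulrC subrr; exact: nn0. Qed.

Lemma Kall n : KP n.
Proof.
elim: n => [|n IH] a b c d j Hn Hca Hbd Hj.
  have [-> -> -> ->] : [/\ a = 0, b = 0, c = 0 & d = 0]%N by split; lia.
  have -> : j = 0%N by lia.
  exact: Ktriv.
have Hn' : (a + b + c + d <= n.+1)%N by [].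
case: (posnP j) => [j0 | jpos].
  subst j; case: (ltnP c a) => [lt_ca | le_ac].
    by apply: (caseB IH) => //; lia.
  have E : c = a by lia. subst c.
  case: (ltnP b d) => [lt_bd | le_db].
    by apply: (caseC IH) => //; lia.
  have E : d = b by lia. subst d. exact: Ktriv.
case: (ltnP b d) => [lt_bd | le_db].
  exact: (caseA IH).
have E : d = b by lia. subst d.
case: (ltnP j (a - c)) => [lt_j | le_j].
  by apply: (caseB IH) => //; lia.
have E : j = (a - c)%N by lia. subst j.
by apply: (caseD IH) => //; lia.
Qed.

Definition wc (x c : nat) : PP := if c == 0%N then 1 else (1 + tt) * qq ^+ (x * c).

Lemma wcS x c : wc x c.+1 = qq ^+ x * wc x c + (if c == 0%N then tt * qq ^+ x else 0).
Proof.
rewrite /wc /=; case: c => [|c] /=; first by rewrite muln1; ring.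
by rewrite mulnS exprD; ring.
Qed.

Lemma bump0 i : bump 0 i = i.+1. Proof. by []. Qed.

Lemma Bcol m s : B m.+1 s = \sum_(c < s.+1) wc m.+1 c * B m (s - c).
Proof.
elim: s => [|s IH]; first by rewrite big_ord1 /wc /= !Bm0 mul1r.
have -> : \sum_(c < s.+2) wc m.+1 c * B m (s.+1 - c) = wc m.+1 0 * B m s.+1
   + qq ^+ m.+1 * (\sum_(c < s.+1) wc m.+1 c * B m (s - c)) + tt * qq ^+ m.+1 * B m s.
  rewrite big_ord_recl mulr_sumr -addrA; congr (_ + _).
  under eq_bigr => i _ do rewrite lift0 subSS wcS mulrDl.
  rewrite big_split /=; congr (_ + _).
    by apply: eq_bigr => i _; rewrite mulrA.
  rewrite big_ord_recl /= big1 ?addr0 ?subn0 //.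
  by move=> i _; rewrite mul0r.
by rewrite (BSS m s) IH /wc /= mul1r.
Qed.

Section Split.
Variable M : nat.
Local Notation T := ('I_M.+1 * bool)%type.

Definition okM s m (f : {ffun 'I_m -> T}) : bool :=
  ((\sum_(i < m) (f i).1 <= s)%N) && [forall i, (f i).2 ==> (0 < (f i).1)%N].
Definition wt m (f : {ffun 'I_m -> T}) : nat := (\sum_(i < m) i.+1 * (f i).1)%N.
Definition nov m (f : {ffun 'I_m -> T}) : nat := #|[pred i | (f i).2]|.
Definition FF m (f : {ffun 'I_m -> T}) : PP := ('X^(wt f) : {poly int})%:P * 'X^(nov f).
Definition H m s : PP := \sum_(f : {ffun 'I_m -> T} | okM s f) FF f.

Definition ext m (x : T) (g : {ffun 'I_m -> T}) : {ffun 'I_m.+1 -> T} :=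
  [ffun i => if unlift ord_max i is Some j then g j else x].

Lemma ext_max m x (g : {ffun 'I_m -> T}) : ext x g ord_max = x.
Proof. by rewrite ffunE unlift_none. Qed.
Lemma ext_lift m x (g : {ffun 'I_m -> T}) j : ext x g (lift ord_max j) = g j.
Proof. by rewrite ffunE liftK. Qed.
Lemma ext_widen m x (g : {ffun 'I_m -> T}) j : ext x g (widen_ord (leqnSn m) j) = g j.
Proof.
have -> : widen_ord (leqnSn m) j = lift ord_max j by apply: val_inj; exact: (esym (lift_max j)).
exact: ext_lift.
Qed.

Lemma ext_bij m : bijective (fun p : T * {ffun 'I_m -> T} => ext p.1 p.2).
Proof.
exists (fun f : {ffun 'I_m.+1 -> T} => ((f ord_max, [ffun j : 'I_m => f (lift ord_max j)]) : T * {ffun 'I_m -> T})).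
  move=> [x g] /=; rewrite ext_max; congr (_, _); apply/ffunP => j.
  by rewrite ffunE ext_lift.
move=> f; apply/ffunP => i; rewrite ffunE.
by case: (unliftP ord_max i) => [j ->|->] //=; rewrite ffunE.
Qed.

Lemma sum_ext m (G : 'I_m.+1 -> nat) :
  (\sum_(i < m.+1) G i = \sum_(i < m) G (lift ord_max i) + G ord_max)%N.
Proof.
rewrite big_ord_recr /=; congr (_ + _)%N; apply: eq_bigr => i _.
by congr G; apply: val_inj; exact: (esym (lift_max i)).
Qed.

Lemma okM_ext m s x (g : {ffun 'I_m -> T}) :
  okM s (ext x g) = [&& (x.1 <= s)%N, x.2 ==> (0 < x.1)%N & okM (s - x.1) g].
Proof.
rewrite /okM sum_ext ext_max.
under eq_bigr => i _ do rewrite ext_lift.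
have -> : [forall i, (ext x g i).2 ==> (0 < (ext x g i).1)%N] =
   (x.2 ==> (0 < x.1)%N) && [forall i, (g i).2 ==> (0 < (g i).1)%N].
  apply/forallP/andP => [h|[h1 /forallP h2] i].
    split; first by have := h ord_max; rewrite ext_max.
    by apply/forallP => j; have := h (lift ord_max j); rewrite ext_lift.
  by case: (unliftP ord_max i) => [j ->|->]; rewrite ?ext_lift ?ext_max // h2.
set S := (\sum_(i < m) _)%N.
case: (leqP x.1 s) => hx /=.
  have -> : (S + x.1 <= s)%N = (S <= s - x.1)%N by apply/idP/idP; lia.
  by case: (_ ==> _); case: (S <= _)%N; case: [forall _, _].
have -> : (S + x.1 <= s)%N = false by apply/negbTE; lia.
done.
Qed.

Lemma polyCXq k : (('X : {poly int}) ^+ k)%:P = qq ^+ k.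
Proof. by rewrite rmorphXn. Qed.

Lemma FF_ext m x (g : {ffun 'I_m -> T}) :
  FF (ext x g) = qq ^+ (m.+1 * x.1) * tt ^+ x.2 * FF g.
Proof.
rewrite /FF /wt /nov sum_ext ext_max.
under eq_bigr => i _ do rewrite ext_lift lift_max.
have -> : #|[pred i | (ext x g i).2]| = (#|[pred i | (g i).2]| + x.2)%N.
  rewrite -!sum1_card big_mkcond sum_ext /= [X in _ = (X + _)%N]big_mkcond /=.
  congr (_ + _)%N; last by rewrite inE ext_max; case: (x.2).
  by apply: eq_bigr => i _; rewrite !inE ext_lift.
rewrite !polyCXq !exprD /tt /=; ring.
Qed.

End Split.

Lemma H0 M s : H M 0 s = 1.
Proof.
pose f0 : {ffun 'I_0 -> ('I_M.+1 * bool)} := [ffun i => (ord0, false)].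
rewrite /H (big_pred1 f0); last first.
  move=> f; rewrite /okM big_ord0 leq0n /=.
  have -> : f == f0 by apply/eqP/ffunP => -[].
  by apply/forallP => -[].
rewrite /FF /wt /nov big_ord0 expr0 polyC1 mul1r.
have -> : #|[pred i : 'I_0 | (f0 i).2]| = 0%N by apply: eq_card0 => -[].
by rewrite expr0.
Qed.

Lemma HS M m s : (s <= M)%N -> H M m.+1 s = \sum_(c < s.+1) wc m.+1 c * H M m (s - c).
Proof.
move=> hsM.
rewrite /H (reindex _ (onW_bij _ (ext_bij M m))) /=.
transitivity (\sum_(x : 'I_M.+1 * bool) \sum_(g : {ffun 'I_m -> 'I_M.+1 * bool} | okM s (ext x g)) FF (ext x g)).
  by rewrite pair_big_dep.
have inner : forall x : 'I_M.+1 * bool, \sum_(g : {ffun 'I_m -> 'I_M.+1 * bool} | okM s (ext x g)) FF (ext x g) =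
  if (x.1 <= s)%N && (x.2 ==> (0 < x.1)%N) then qq ^+ (m.+1 * x.1) * tt ^+ x.2 * H M m (s - x.1) else 0.
  move=> x; rewrite (eq_bigl (fun g => [&& (x.1 <= s)%N, x.2 ==> (0 < x.1)%N & okM (s - x.1) g])); last first.
    by move=> g; rewrite okM_ext.
  under eq_bigr => g _ do rewrite FF_ext.
  rewrite -mulr_sumr.
  by case: (x.1 <= s)%N; case: (x.2 ==> _) => /=; rewrite ?big_pred0_eq ?mulr0.
rewrite (eq_bigr _ (fun x _ => inner x)).
transitivity (\sum_(c : 'I_M.+1) \sum_(o : bool) (if (c <= s)%N && (o ==> (0 < c)%N)
    then qq ^+ (m.+1 * c) * tt ^+ o * H M m (s - c) else 0)).
  by rewrite pair_bigA; apply: eq_bigr => -[c o].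
transitivity (\sum_(c < M.+1) if (c <= s)%N then wc m.+1 c * H M m (s - c) else 0).
  apply: eq_bigr => c _; rewrite big_bool /=.
  case: (c <= s)%N => /=; last by rewrite addr0.
  rewrite /wc; case: c => -[|c] hc /=; first by rewrite muln0 !expr0 add0r !mul1r.
  by rewrite expr1 expr0; ring.
rewrite -big_mkcond /=.
rewrite (eq_bigl (fun c : 'I_M.+1 => (c < s.+1)%N)) //.
by rewrite (big_ord_narrow (hsM : (s.+1 <= M.+1)%N)).
Qed.

Lemma HB M m s : (s <= M)%N -> H M m s = B m s.
Proof.
elim: m s => [|m IH] s hs; first by rewrite H0 B0b.
rewrite HS // Bcol; apply: eq_bigr => c _; rewrite IH //; lia.
Qed.

Lemma ovB a b : ovgauss a b = B (a - b) b.
Proof. by rewrite -(HB (M := b) (a - b) (leqnn b)). Qed.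

Theorem corollary6p7 (k l r n : nat) :
  (r <= k)%N -> (k <= l)%N -> (l + r <= n)%N ->
  nonneg_coefs (ovgauss n k * ovgauss n l - ovgauss n (k - r) * ovgauss n (l + r)).
Proof.
move=> hrk hkl hln; rewrite !ovB; change (nn (B (n - k) k * B (n - l) l -
  B (n - (k - r)) (k - r) * B (n - (l + r)) (l + r))).
elim: r hrk hln => [|r IH] hrk hln.
  by rewrite subn0 addn0 subrr; exact: nn0.
have IH' : nn (B (n - k) k * B (n - l) l - B (n - (k - r)) (k - r) * B (n - (l + r)) (l + r)) by apply: IH; lia.
have key : nn (B (n - (k - r))%N (k - r)%N * B (n - (l + r))%N (l + r)%N
   - B (n - (k - r.+1))%N (k - r.+1)%N * B (n - (l + r.+1))%N (l + r.+1)%N).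
  have := @Kall _ (n - (k - r))%N (k - r.+1)%N (n - (l + r.+1))%N (l + r)%N 0 (leqnn _).
  rewrite /KX expr0 mul1r.
  have e1 : (k - r.+1).+1 = (k - r)%N by lia.
  have e2 : (n - (l + r.+1)).+1 = (n - (l + r))%N by lia.
  have e3 : (n - (k - r)).+1 = (n - (k - r.+1))%N by lia.
  have e4 : (l + r).+1 = (l + r.+1)%N by lia.
  rewrite e1 e2 e3 e4; apply; lia.
by move: (nnD IH' key); rewrite addrA subrK.
Qed.
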